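(* Let $\mathbf A$ be a non-trivial finite Cornish algebra of type $F=F^+\,\dot\cup\,F^-$. If $F^-=\emptyset$, then $\mathbf A$ is not quasi-primal.
   Context: Let $F=F^+\,\dot\cup\,F^-$ be a set of unary operation symbols. A Cornish algebra of type $F$ is an algebra $\langle A;\vee,\wedge,\{f^{\mathbf A}\}_{f\in F},0,1\rangle$ whose reduct $\langle A;\vee,\wedge,0,1\rangle$ is a bounded distributive lattice, with $f^{\mathbf A}$ an endomorphism of that bounded lattice for $f\in F^+$ and a dual endomorphism for $f\in F^-$. A finite algebra is quasi-primal if the ternary discriminator ($\tau(x,y,z)=x$ if $x\ne y$, $=z$ if $x=y$) is a term function of it. *)

(* Defs.v *)
From HB Require Import structures.
From mathcomp Require Import all_boot all_order.
Set Implicit Arguments. Unset Strict Implicit. Unset Printing Implicit Defensive.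
Import Order.TTheory.
Local Open Scope order_scope.

(* The carrier is a finite bounded distributive lattice (finTBDistrLatticeType),
   the unary operation symbols form an arbitrary type F, and
   [pos : F -> bool] splits F into F^+ (pos f = true) and F^- (pos f = false). *)

Definition is_bendo d (L : tbDistrLatticeType d) (h : L -> L) : Prop :=
  [/\ forall x y, h (x `|` y) = h x `|` h y,
      forall x y, h (x `&` y) = h x `&` h y,
      h \bot = \bot & h \top = \top].

Definition is_dual_bendo d (L : tbDistrLatticeType d) (h : L -> L) : Prop :=
  [/\ forall x y, h (x `|` y) = h x `&` h y,
      forall x y, h (x `&` y) = h x `|` h y,
      h \bot = \top & h \top = \bot].

Definition cornish_algebra (F : Type) (pos : F -> bool) d
    (L : tbDistrLatticeType d) (ops : F -> L -> L) : Prop :=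
  forall f, if pos f then is_bendo (ops f) else is_dual_bendo (ops f).

Inductive term (F : Type) (n : nat) : Type :=
  | TVar of 'I_n
  | TBot
  | TTop
  | TJoin of term F n & term F n
  | TMeet of term F n & term F n
  | TApp of F & term F n.

Fixpoint eval_term (F : Type) (n : nat) d (L : tbDistrLatticeType d)
    (ops : F -> L -> L) (e : 'I_n -> L) (t : term F n) : L :=
  match t with
  | TVar i => e i
  | TBot => \bot
  | TTop => \top
  | TJoin t1 t2 => eval_term ops e t1 `|` eval_term ops e t2
  | TMeet t1 t2 => eval_term ops e t1 `&` eval_term ops e t2
  | TApp f t1 => ops f (eval_term ops e t1)
  end.

Definition discriminator (T : eqType) (x y z : T) : T := if x != y then x else z.

Definition env3 (T : Type) (x y z : T) (i : 'I_3) : T :=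
  match val i with 0 => x | 1 => y | _ => z end.

Definition quasi_primal (F : Type) d (L : finTBDistrLatticeType d)
    (ops : F -> L -> L) : Prop :=
  exists t : term F 3, forall x y z : L,
    eval_term ops (env3 x y z) t = discriminator x y z.

(* Main.v *)
Require Import Defs.
From mathcomp Require Import all_boot all_order.
Import Order.TTheory.
Local Open Scope order_scope.

Lemma eval_mono (F : Type) (pos : F -> bool) d (L : finTBDistrLatticeType d)
  (ops : F -> L -> L) :
  cornish_algebra pos ops -> (forall f : F, pos f = true) ->
  forall (n : nat) (t : term F n) (e e' : 'I_n -> L),
  (forall i, e i <= e' i) -> eval_term ops e t <= eval_term ops e' t.
Proof.
move=> hc hp n t e e' he; elim: t => /=.
- by [].
- exact: le0x.
- exact: lex1.
- by move=> t1 IH1 t2 IH2; exact: leU2.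
- by move=> t1 IH1 t2 IH2; exact: leI2.
- move=> f t IH; have := hc f; rewrite hp => -[hj _ _ _].
  by move: IH; rewrite leEjoin => /eqP H; rewrite leEjoin -hj H.
Qed.

Local Close Scope order_scope.

Theorem theorem5p7 (F : Type) (pos : F -> bool) (d : Order.disp_t)
    (L : finTBDistrLatticeType d) (ops : F -> L -> L) :
  cornish_algebra pos ops ->
  1 < #|{: L}| ->
  (forall f : F, pos f = true) ->
  ~ quasi_primal ops.
Proof.
move=> hc hcard hp [t ht].
Local Open Scope order_scope.
have hne : (\bot : L) != \top.
  apply/negP => /eqP hbt; move: hcard.
  have all_eq : forall x : L, x = \bot.
    by move=> x; apply/le_anti; rewrite le0x andbT hbt lex1.
  suff -> : #|{: L}| = 1 by [].
  apply/eqP; rewrite eqn_leq; apply/andP; split.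
    rewrite -(card1 (\bot : L)); apply: subset_leq_card.
    by apply/subsetP => x _; rewrite inE (all_eq x).
  by apply/card_gt0P; exists \bot.
have hle : forall i : 'I_3, (env3 (\bot : L) \bot \top i <= env3 \bot \top \top i)%O.
  by move=> [[|[|[|i]]] hi] //=; rewrite ?lexx ?le0x.
have := @eval_mono F pos d L ops hc hp 3 t _ _ hle.
rewrite !ht /discriminator eqxx hne /= => H.
by move: hne; rewrite eq_le le0x H.
Qed.
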